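(* A profile $(D_n,G_n,\mathbf q_n)_{n\in\mathcal N}$ is a Variational Equilibrium of the peer-to-peer game if and only if it is an optimal solution of the centralized problem (P). That is, the set of Variational Equilibria coincides with the set of social welfare maximizers.
   Context: Model. $\mathcal N$ is a finite set of nodes (agents) containing a root node $0$. Each node $n$ has a neighborhood $\Omega_n\subseteq\mathcal N$ with $n\in\Omega_n$; the neighbor relation is symmetric ($m\in\Omega_n\iff n\in\Omega_m$) and every node is a neighbor of the root. Decision variables: demand $D_n$, flexibility activation $G_n$, and for each $m\in\Omega_n\setminus\{n\}$ a trade $q_{mn}\in\mathbb R$ (quantity sent from $m$ to $n$; $q_{mn}>0$ means $n$ buys from $m$). The net import of $n$ is $Q_n=\sum_{m\in\Omega_n\setminus\{n\}}q_{mn}$. Parameters: $0\le\underline D_n\le\overline D_n$, $0\le\underline G_n\le\overline G_n$, capacities $\kappa_{nm}=\kappa_{mn}\in[0,\infty)$, exogenous renewable generation $\Delta G_n$, constants $a_n,b_n,d_n>0$, $\tilde a_n,\tilde b_n>0$, target demand $D_n^\star$, preference prices $c_{nm}>0$. Costs/utilities: $C_n(G)=\tfrac12 a_nG^2+b_nG+d_n$, $U_n(D)=-\tilde a_n(D-D_n^\star)^2+\tilde b_n$, $\tilde C_n(\mathbf q_n)=\sum_{m\in\Omega_n\setminus\{n\}}c_{nm}q_{mn}$, $\Pi_n=U_n(D_n)-C_n(G_n)-\tilde C_n(\mathbf q_n)$, $SW=\sum_{n\in\mathcal N}\Pi_n$. Centralized problem (P): maximize $SW$ over $(\mathbf D,\mathbf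 G,\mathbf q)$ subject to (1) $\underline D_n\le D_n\le\overline D_n$; (2) $\underline G_n\le G_n\le\overline G_n$; (3) $q_{mn}\le\kappa_{mn}$ for all $n$ and $m\in\Omega_n\setminus\{n\}$; (4) $q_{mn}+q_{nm}\le0$ for each pair of distinct neighbors; (5) $D_n=G_n+\Delta G_n+Q_n$ for all $n$. Peer-to-peer game: agent $n$ controls $(D_n,G_n,\mathbf q_n)$ with $\mathbf q_n=(q_{mn})_{m\in\Omega_n\setminus\{n\}}$ and, taking the other agents' variables as given, maximizes $\Pi_n$ subject to $\underline D_n\le D_n\le\overline D_n$ (multipliers $\underline\mu_n,\overline\mu_n$), $\underline G_n\le G_n\le\overline G_n$ ($\underline\nu_n,\overline\nu_n$), $q_{mn}\le\kappa_{mn}$ for $m\in\Omega_n\setminus\{n\}$ ($\xi_{nm}$), the coupling constraints $q_{mn}\le-q_{nm}$ for $m\in\Omega_n\setminus\{n\}$ ($\zeta_{nm}$), and $D_n=G_n+\Delta G_n+Q_n$ ($\lambda_n$). The system $KKT_n$ consists of $2\tilde a_n(D_n-D_n^\star)-\underline\mu_n+\overline\mu_n+\lambda_n=0$, $a_nG_n+b_n-\underline\nu_n+\overline\nu_n-\lambda_n=0$, $c_{nm}+\xi_{nm}+\zeta_{nm}-\lambda_n=0$ for $m\in\Omega_n\setminus\{n\}$, feasibility, and complementarity $0\le\underline\mu_n\perp D_n-\underline D_n\ge0$, $0\le\overline\mu_n\perp\overline D_n-D_n\ge0$, $0\le\underline\nu_n\perp G_n-\underline G_n\ge0$, $0\le\overline\nu_n\perp\overline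 G_n-G_n\ge0$, $0\le\xi_{nm}\perp\kappa_{mn}-q_{mn}\ge0$, $0\le\zeta_{nm}\perp-q_{mn}-q_{nm}\ge0$ for all $m\in\Omega_n\setminus\{n\}$. A Generalized Nash Equilibrium (GNE) is a profile such that for each $n$ there are multipliers with $KKT_n$ satisfied (equivalently, each agent's variables solve her problem given the others'). A Variational Equilibrium is a GNE whose multipliers can be chosen so that in addition $\zeta_{nm}=\zeta_{mn}$ for all $n$ and $m\in\Omega_n\setminus\{n\}$. *)

(* Defs.v *)
From HB Require Import structures.
From mathcomp Require Import all_boot all_order all_algebra.
Set Implicit Arguments. Unset Strict Implicit. Unset Printing Implicit Defensive.
Import Order.TTheory GRing.Theory Num.Theory.
Local Open Scope ring_scope.

Record params (N : finType) (R : realFieldType) := Params {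
  root : N;
  Om : rel N;                   (* m \in Omega_n  <->  Om n m *)
  Dlo : N -> R; Dhi : N -> R;
  Glo : N -> R; Ghi : N -> R;
  kappa : N -> N -> R;
  dG : N -> R;                  (* renewable generation Delta G_n *)
  ca : N -> R; cb : N -> R; cd : N -> R;   (* a_n, b_n, d_n *)
  ua : N -> R; ub : N -> R;                 (* tilde a_n, tilde b_n *)
  Dstar : N -> R;
  c : N -> N -> R
}.

Definition nbr N R (P : params N R) (n m : N) : bool := Om P n m && (m != n).

Definition valid_params N R (P : params N R) : Prop :=
  [/\ (forall n, Om P n n),
      (forall n m, Om P n m = Om P m n),
      (forall n, Om P (root P) n)
    & [/\ (forall n, 0 <= Dlo P n <= Dhi P n),
      (forall n, 0 <= Glo P n <= Ghi P n),
      (forall n m, kappa P n m = kappa P m n /\ 0 <= kappa P n m),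
      (forall n, [/\ 0 < ca P n, 0 < cb P n, 0 < cd P n, 0 < ua P n & 0 < ub P n])
    & (forall n m, nbr P n m -> 0 < c P n m)]].

(* A profile: D n, G n, and q m n = quantity sent from m to n
   (only entries with nbr P n m are meaningful). *)
Definition Qnet N R (P : params N R) (q : N -> N -> R) (n : N) : R :=
  \sum_(m | nbr P n m) q m n.

Definition costC N R (P : params N R) (n : N) (g : R) : R :=
  ca P n * g ^+ 2 / 2%:R + cb P n * g + cd P n.
Definition utilU N R (P : params N R) (n : N) (x : R) : R :=
  - (ua P n * (x - Dstar P n) ^+ 2) + ub P n.
Definition costCt N R (P : params N R) (q : N -> N -> R) (n : N) : R :=
  \sum_(m | nbr P n m) c P n m * q m n.
Definition payoff N R (P : params N R) (D G : N -> R) (q : N -> N -> R) (n : N) : R :=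
  utilU P n (D n) - costC P n (G n) - costCt P q n.
Definition SW N R (P : params N R) (D G : N -> R) (q : N -> N -> R) : R :=
  \sum_n payoff P D G q n.

Definition feasible N R (P : params N R) (D G : N -> R) (q : N -> N -> R) : Prop :=
  forall n,
    [/\ Dlo P n <= D n <= Dhi P n,
        Glo P n <= G n <= Ghi P n,
        (forall m, nbr P n m -> q m n <= kappa P m n),
        (forall m, nbr P n m -> q m n + q n m <= 0)
      & D n = G n + dG P n + Qnet P q n].

Definition optimal N R (P : params N R) (D G : N -> R) (q : N -> N -> R) : Prop :=
  feasible P D G q /\
  forall D' G' q', feasible P D' G' q' -> SW P D' G' q' <= SW P D G q.

(* The system KKT_n with multipliers
   mul = underline mu_n, mu = overline mu_n, nul = underline nu_n,
   nu = overline nu_n, lam = lambda_n, xi m = xi_{nm}, zeta m = zeta_{nm}. *)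
Definition KKT N R (P : params N R) (D G : N -> R) (q : N -> N -> R) (n : N)
  (mul mu nul nu lam : R) (xi zeta : N -> R) : Prop :=
  [/\ [/\ 2%:R * ua P n * (D n - Dstar P n) - mul + mu + lam = 0,
      ca P n * G n + cb P n - nul + nu - lam = 0
    & (forall m, nbr P n m -> c P n m + xi m + zeta m - lam = 0)],
      [/\ Dlo P n <= D n <= Dhi P n,
          Glo P n <= G n <= Ghi P n,
          (forall m, nbr P n m -> q m n <= kappa P m n),
          (forall m, nbr P n m -> q m n <= - q n m)
        & D n = G n + dG P n + Qnet P q n],
      [/\ (0 <= mul /\ mul * (D n - Dlo P n) = 0),
          (0 <= mu /\ mu * (Dhi P n - D n) = 0),
          (0 <= nul /\ nul * (G n - Glo P n) = 0)
        & (0 <= nu /\ nu * (Ghi P n - G n) = 0)]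
    & forall m, nbr P n m ->
        (0 <= xi m /\ xi m * (kappa P m n - q m n) = 0) /\
        (0 <= zeta m /\ zeta m * (- q m n - q n m) = 0)].

Definition GNE N R (P : params N R) (D G : N -> R) (q : N -> N -> R) : Prop :=
  forall n, exists mul mu nul nu lam : R, exists xi zeta : N -> R,
    KKT P D G q n mul mu nul nu lam xi zeta.

(* Variational Equilibrium: a GNE whose multipliers can be chosen with
   zeta_{nm} = zeta_{mn}.  zeta n m stands for zeta_{nm}. *)
Definition VE N R (P : params N R) (D G : N -> R) (q : N -> N -> R) : Prop :=
  exists (mul mu nul nu lam : N -> R) (xi zeta : N -> N -> R),
    (forall n, KKT P D G q n (mul n) (mu n) (nul n) (nu n) (lam n) (xi n) (zeta n)) /\
    (forall n m, nbr P n m -> zeta n m = zeta m n).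

(* Main.v *)
Require Import Defs.
From HB Require Import structures.
From mathcomp Require Import all_boot all_order all_algebra.
From mathcomp Require Import ring lra.
From Stdlib Require Import Classical FunctionalExtensionality.
Import Order.TTheory GRing.Theory Num.Theory.
Local Open Scope ring_scope.

Definition dot {R : realFieldType} {I : finType} (u v : I -> R) : R :=
  \sum_i u i * v i.

Lemma dotBl {R : realFieldType} {I : finType} (u v x : I -> R) (k : R) :
  dot (fun i => u i - k * v i) x = dot u x - k * dot v x.
Proof.
rewrite /dot mulr_sumr -sumrB; apply: eq_bigr => i _; ring.
Qed.

Lemma dotBr {R : realFieldType} {I : finType} (u v x : I -> R) (k : R) :
  dot x (fun i => u i - k * v i) = dot x u - k * dot x v.
Proof.
rewrite /dot mulr_sumr -sumrB; apply: eq_bigr => i _; ring.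
Qed.

Lemma dotDr {R : realFieldType} {I : finType} (u v x : I -> R) (k : R) :
  dot x (fun i => u i + k * v i) = dot x u + k * dot x v.
Proof.
rewrite /dot mulr_sumr -big_split; apply: eq_bigr => i _ /=; ring.
Qed.

Fixpoint inCone {R : realFieldType} {I : finType} (s : seq (I -> R)) (c : I -> R) : Prop :=
  if s is a :: s' then exists t, 0 <= t /\ inCone s' (fun i => c i - t * a i)
  else forall i, c i = 0.

Fixpoint allle {R : realFieldType} {I : finType} (s : seq (I -> R)) (x : I -> R) : Prop :=
  if s is a :: s' then dot a x <= 0 /\ allle s' x else True.

Lemma inCone_ext {R : realFieldType} {I : finType} (s : seq (I -> R)) :
  forall c c', (forall i, c i = c' i) -> inCone s c -> inCone s c'.
Proof.
elim: s => [|a s IH] c c' E /=.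
  by move=> H i; rewrite -E.
move=> [t [t0 H]]; exists t; split=> //.
by apply: IH H => i; rewrite E.
Qed.

Lemma allle_map {R : realFieldType} {I : finType} (f : (I -> R) -> (I -> R)) x z s :
  (forall a, dot (f a) x = dot a z) -> allle (map f s) x -> allle s z.
Proof.
move=> E; elim: s => [|a s IH] //= [H1 H2]; split; last exact: IH.
by rewrite -E.
Qed.

Definition proj {R : realFieldType} {I : finType} (b x0 v : I -> R) : I -> R :=
  fun i => v i - dot v x0 / dot b x0 * b i.

Lemma cone_lift {R : realFieldType} {I : finType} (b x0 : I -> R) :
  0 < dot b x0 -> forall s w, allle s x0 -> inCone (map (proj b x0) s) (proj b x0 w) ->
  exists t, dot w x0 / dot b x0 <= t /\ inCone s (fun i => w i - t * b i).
Proof.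
move=> hb; elim=> [|a s IH] w /=.
  move=> _ H; exists (dot w x0 / dot b x0); split => //.
move=> [ha hs] [y [y0 H]].
have H' : inCone (map (proj b x0) s) (proj b x0 (fun i => w i - y * a i)).
  apply: inCone_ext H => i; rewrite /proj dotBl; ring.
have [t [ht Ht]] := IH _ hs H'.
exists t; split.
  apply: le_trans ht; rewrite dotBl mulrBl.
  have : y * dot a x0 / dot b x0 <= 0.
    rewrite -mulrA; apply: mulr_ge0_le0 => //; apply: mulr_le0_ge0 => //.
    by rewrite invr_ge0 ltW.
  lra.
exists y; split => //; apply: inCone_ext Ht => i; ring.
Qed.

Lemma dot_ge0 {R : realFieldType} {I : finType} (c : I -> R) : 0 <= dot c c.
Proof. by rewrite /dot sumr_ge0 // => i _; rewrite -expr2 sqr_ge0. Qed.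

Lemma farkas {R : realFieldType} {I : finType} (n : nat) :
  forall (s : seq (I -> R)) c, size s = n ->
  (forall x, allle s x -> dot c x <= 0) -> inCone s c.
Proof.
elim: n => [|n IH] [|b s] c //= hs H.
- have : dot c c = 0 by apply/le_anti; rewrite dot_ge0 H.
  move/eqP; rewrite /dot psumr_eq0 => [/allP A i|i _]; last by rewrite -expr2 sqr_ge0.
  by move: (A i (mem_index_enum _)) => /= /eqP /eqP; rewrite mulf_eq0 orbb => /eqP.
case: (classic (forall x, allle s x -> dot c x <= 0)) => [Hs|Hn].
  exists 0; split => //; apply: inCone_ext (IH s c _ Hs) => [i|]; [ring| by case: hs].
have [x0 Hx0] : exists x0, allle s x0 /\ 0 < dot c x0.
  apply: NNPP => Hne; apply: Hn => x Hx; apply: NNPP => Hc; apply: Hne.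
  by exists x; split=> //; rewrite ltNge; apply/negP.
case: Hx0 => Ax0 cx0.
have hb : 0 < dot b x0.
  rewrite ltNge; apply/negP => hb.
  by have := H x0 (conj hb Ax0); rewrite leNgt cx0.
have Hp : forall x, allle (map (proj b x0) s) x -> dot (proj b x0 c) x <= 0.
  move=> x Hx.
  pose z := fun i => x i - dot b x / dot b x0 * x0 i.
  have E : forall a, dot (proj b x0 a) x = dot a z.
    by move=> a; rewrite /proj dotBl /z dotBr; field; rewrite gt_eqF.
  rewrite E; apply: H; split; last exact: allle_map Hx.
  rewrite /z dotBr mulfVK ?subrr // gt_eqF //.
have := IH _ _ _ Hp; rewrite size_map; case: hs => hs; move/(_ hs) => HC.
have [t [ht Ht]] := @cone_lift R I b x0 hb s c Ax0 HC.
exists t; split => //; apply: le_trans ht; rewrite divr_ge0 // ltW //.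
Qed.

Lemma inCone_coef {R : realFieldType} {I J : finType} (f : J -> I -> R) (r : seq J) :
  uniq r -> forall c, inCone (map f r) c ->
  exists y : J -> R, (forall j, 0 <= y j) /\ forall i, c i = \sum_(j <- r) y j * f j i.
Proof.
elim: r => [|j r IH] /=.
  move=> _ c H; exists (fun _ => 0); split => // i; by rewrite big_nil H.
move=> /andP [jr ur] c [t [t0 H]].
have [y [y0 Hy]] := IH ur _ H.
exists (fun k => if k == j then t else y k); split.
  by move=> k; case: ifP.
move=> i; rewrite big_cons eqxx.
rewrite (eq_big_seq (fun k => y k * f k i)); last first.
  move=> k kr; case: eqP => // E; by rewrite -E kr in jr.
by rewrite -Hy; ring.
Qed.

Lemma dot_sub {R : realFieldType} {I : finType} (a x y : I -> R) :
  dot a (fun i => x i - y i) = dot a x - dot a y.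
Proof. by rewrite /dot -sumrB; apply: eq_bigr => i _; ring. Qed.

Lemma kkt_generic {R : realFieldType} {I J : finType} (A : J -> I -> R) (b : J -> R)
  (xs : I -> R) (F : (I -> R) -> R) (g : I -> R) (h : (I -> R) -> R) :
  (forall j, dot (A j) xs <= b j) ->
  (forall d, 0 <= h d) ->
  (forall d t, F (fun i => xs i + t * d i) = F xs + t * dot g d - t ^+ 2 * h d) ->
  (forall x, (forall j, dot (A j) x <= b j) -> F x <= F xs) <->
  exists y : J -> R, (forall j, 0 <= y j /\ y j * (b j - dot (A j) xs) = 0) /\
     forall i, g i = \sum_j y j * A j i.
Proof.
move=> Hxs Hh HF; split; last first.
  move=> [y [Hy Hg]] x Hx.
  have -> : x = (fun i => xs i + 1 * (x i - xs i)).
    by apply: functional_extensionality => i; ring.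
  rewrite HF.
  have : dot g (fun i => x i - xs i) <= 0.
    rewrite /dot (eq_bigr (fun i => \sum_j y j * (A j i * (x i - xs i)))); last first.
      by move=> i _; rewrite Hg mulr_suml; apply: eq_bigr => j _; rewrite mulrA.
    rewrite exchange_big /= sumr_le0 // => j _.
    rewrite -mulr_sumr.
    have := dot_sub (A j) x xs; rewrite /dot => ->.
    have [y0 yc] := Hy j; have := Hx j.
    have -> : y j * (dot (A j) x - dot (A j) xs) =
              y j * (dot (A j) x - b j) + y j * (b j - dot (A j) xs) by ring.
    rewrite yc addr0 => hx; apply: mulr_ge0_le0 => //; lra.
  have := Hh (fun i => x i - xs i); lra.
move=> Hopt.
pose act j := dot (A j) xs == b j.
pose A' j := if act j then A j else (fun _ : I => 0).
have Hfar : forall d, allle (map A' (index_enum J)) d -> dot g d <= 0.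
  move=> d Hd.
  have HA : forall j, act j -> dot (A j) d <= 0.
    move=> j aj.
    have : forall r, allle (map A' r) d -> j \in r -> dot (A j) d <= 0.
      elim=> [|k r IH] //= [H1 H2]; rewrite inE; case: (eqVneq j k) => [E|_] /=.
        by move: H1; rewrite -E /A' aj.
      exact: IH.
    by move/(_ _ Hd (mem_index_enum j)).
  rewrite leNgt; apply/negP => gd.
  pose M := \sum_(j | ~~ act j) `|dot (A j) d| / (b j - dot (A j) xs).
  have sl : forall j, ~~ act j -> 0 < b j - dot (A j) xs.
    by move=> j aj; rewrite subr_gt0 lt_neqAle Hxs andbT.
  have M0 : 0 <= M.
    by apply: sumr_ge0 => j aj; rewrite divr_ge0 // ltW // sl.
  pose K := h d / dot g d.
  have K0 : 0 <= K by rewrite divr_ge0 // ltW.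
  pose t := (1 + M + K)^-1.
  have den : 0 < 1 + M + K by lra.
  have t0 : 0 < t by rewrite invr_gt0.
  have t1 : t * (1 + M + K) = 1 by rewrite mulVf // gt_eqF.
  have := Hopt (fun i => xs i + t * d i).
  rewrite HF.
  have -> : t ^+ 2 * h d = t * ((t * K) * dot g d).
    rewrite /K expr2 -!mulrA; congr (_ * (_ * _)); rewrite mulVf ?mulr1 // gt_eqF //.
  have : t * K < 1 by nra.
  move=> tK Hc.
  have : F xs + t * dot g d - t * (t * K * dot g d) <= F xs.
    apply: Hc => j; rewrite dotDr.
    case aj: (act j).
      move/eqP: (aj) => ->; have := HA j aj.
      move=> h1; have : t * dot (A j) d <= 0 by apply: mulr_ge0_le0 => //; exact: ltW.
      lra.
    have sj := sl j (negbT aj).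
    have le1 : `|dot (A j) d| / (b j - dot (A j) xs) <= M.
      rewrite /M (bigD1 j) ?aj //= lerDl sumr_ge0 // => k /andP [ak _].
      by rewrite divr_ge0 // ltW // sl.
    have : t * (`|dot (A j) d| / (b j - dot (A j) xs)) < 1.
      have : t * M < 1 by nra.
      have : t * (`|dot (A j) d| / (b j - dot (A j) xs)) <= t * M.
        by rewrite ler_pM2l.
      lra.
    rewrite mulrA ltr_pdivrMr // mul1r => h2.
    have : t * dot (A j) d <= t * `|dot (A j) d|.
      by rewrite ler_pM2l // ler_norm.
    lra.
  move=> H2.
  have : 0 < t * dot g d * (1 - t * K) by rewrite mulr_gt0 // ?mulr_gt0 // subr_gt0.
  lra.
have := @farkas R I _ (map A' (index_enum J)) g erefl Hfar.
move/(@inCone_coef R I J A' _ (index_enum_uniq J)) => [y [y0 Hy]].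
exists (fun j => if act j then y j else 0); split.
  move=> j; case aj: (act j); last by rewrite mul0r.
  by move/eqP: aj => ->; rewrite subrr mulr0.
move=> i; rewrite Hy; apply: eq_bigr => j _.
by rewrite /A'; case: (act j); rewrite ?mulr0 ?mul0r.
Qed.

Set Implicit Arguments. Unset Strict Implicit. Unset Printing Implicit Defensive.

Lemma sum_delta {R : realFieldType} {T : finType} (x0 : T) (F : T -> R) :
  (forall x, x != x0 -> F x = 0) -> \sum_x F x = F x0.
Proof.
move=> H; rewrite (bigD1 x0) //= big1 ?addr0 // => x /andP [_ ]; exact: H.
Qed.

Definition eD {N : finType} {R : realFieldType} (n : N) (i : (N + N) + (N * N)) : R :=
  if i is inl (inl n') then (n' == n)%:R else 0.
Definition eG {N : finType} {R : realFieldType} (n : N) (i : (N + N) + (N * N)) : R :=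
  if i is inl (inr n') then (n' == n)%:R else 0.
Definition eQ {N : finType} {R : realFieldType} (p : N * N) (i : (N + N) + (N * N)) : R :=
  if i is inr p' then (p' == p)%:R else 0.
Definition Qv {N : finType} {R : realFieldType} (P : params N R) (n : N) (i : (N + N) + (N * N)) : R :=
  \sum_(m | nbr P n m) eQ (m, n) i.

Definition Amat {N : finType} {R : realFieldType} (P : params N R)
  (j : ((N + N) + (N + N)) + (((N * N) + (N * N)) + (N + N)))
  (i : (N + N) + (N * N)) : R :=
  match j with
  | inl (inl (inl n)) => - eD n i
  | inl (inl (inr n)) => eD n i
  | inl (inr (inl n)) => - eG n i
  | inl (inr (inr n)) => eG n i
  | inr (inl (inl p)) => (nbr P p.2 p.1)%:R * eQ p i
  | inr (inl (inr p)) => (nbr P p.2 p.1)%:R * (eQ p i + eQ (p.2, p.1) i)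
  | inr (inr (inl n)) => eD n i - eG n i - Qv P n i
  | inr (inr (inr n)) => - (eD n i - eG n i - Qv P n i)
  end.

Definition bv {N : finType} {R : realFieldType} (P : params N R)
  (j : ((N + N) + (N + N)) + (((N * N) + (N * N)) + (N + N))) : R :=
  match j with
  | inl (inl (inl n)) => - Dlo P n
  | inl (inl (inr n)) => Dhi P n
  | inl (inr (inl n)) => - Glo P n
  | inl (inr (inr n)) => Ghi P n
  | inr (inl (inl p)) => (nbr P p.2 p.1)%:R * kappa P p.1 p.2
  | inr (inl (inr p)) => 0
  | inr (inr (inl n)) => dG P n
  | inr (inr (inr n)) => - dG P n
  end.

Definition Aform {N : finType} {R : realFieldType} (P : params N R)
  (j : ((N + N) + (N + N)) + (((N * N) + (N * N)) + (N + N)))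
  (x : (N + N) + (N * N) -> R) : R :=
  match j with
  | inl (inl (inl n)) => - x (inl (inl n))
  | inl (inl (inr n)) => x (inl (inl n))
  | inl (inr (inl n)) => - x (inl (inr n))
  | inl (inr (inr n)) => x (inl (inr n))
  | inr (inl (inl p)) => (nbr P p.2 p.1)%:R * x (inr p)
  | inr (inl (inr p)) => (nbr P p.2 p.1)%:R * (x (inr p) + x (inr (p.2, p.1)))
  | inr (inr (inl n)) => x (inl (inl n)) - x (inl (inr n)) - \sum_(m | nbr P n m) x (inr (m, n))
  | inr (inr (inr n)) => - (x (inl (inl n)) - x (inl (inr n)) - \sum_(m | nbr P n m) x (inr (m, n)))
  end.


Lemma dotN {R : realFieldType} {I : finType} (u x : I -> R) :
  dot (fun i => - u i) x = - dot u x.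
Proof. by rewrite /dot -sumrN; apply: eq_bigr => i _; rewrite mulNr. Qed.
Lemma dotM {R : realFieldType} {I : finType} (k : R) (u x : I -> R) :
  dot (fun i => k * u i) x = k * dot u x.
Proof. by rewrite /dot mulr_sumr; apply: eq_bigr => i _; rewrite mulrA. Qed.
Lemma dotD {R : realFieldType} {I : finType} (u v x : I -> R) :
  dot (fun i => u i + v i) x = dot u x + dot v x.
Proof. by rewrite /dot -big_split; apply: eq_bigr => i _; rewrite mulrDl. Qed.
Lemma dotB {R : realFieldType} {I : finType} (u v x : I -> R) :
  dot (fun i => u i - v i) x = dot u x - dot v x.
Proof. by rewrite /dot -sumrB; apply: eq_bigr => i _; rewrite mulrBl. Qed.

Lemma dot_eD {N : finType} {R : realFieldType} (n : N) (x : (N + N) + (N * N) -> R) :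
  dot (eD n) x = x (inl (inl n)).
Proof.
rewrite /dot (@sum_delta R _ (inl (inl n))) /eD ?eqxx ?mul1r // => [[[n'|n']|p']] //=;
  rewrite ?mul0r //.
by case: (eqVneq n' n) => [->|ne]; rewrite ?eqxx ?mul0r.
Qed.

Lemma dot_eG {N : finType} {R : realFieldType} (n : N) (x : (N + N) + (N * N) -> R) :
  dot (eG n) x = x (inl (inr n)).
Proof.
rewrite /dot (@sum_delta R _ (inl (inr n))) /eG ?eqxx ?mul1r // => [[[n'|n']|p']] //=;
  rewrite ?mul0r //.
by case: (eqVneq n' n) => [->|ne]; rewrite ?eqxx ?mul0r.
Qed.

Lemma dot_eQ {N : finType} {R : realFieldType} (p : N * N) (x : (N + N) + (N * N) -> R) :
  dot (eQ p) x = x (inr p).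
Proof.
rewrite /dot (@sum_delta R _ (inr p)) /eQ ?eqxx ?mul1r // => [[[n'|n']|p']] //=;
  rewrite ?mul0r //.
by case: (eqVneq p' p) => [->|ne]; rewrite ?eqxx ?mul0r.
Qed.

Lemma dot_Qv {N : finType} {R : realFieldType} (P : params N R) n (x : (N + N) + (N * N) -> R) :
  dot (Qv P n) x = \sum_(m | nbr P n m) x (inr (m, n)).
Proof.
rewrite /dot /Qv (eq_bigr (fun i => \sum_(m | nbr P n m) eQ (m, n) i * x i)); last first.
  by move=> i _; rewrite mulr_suml.
rewrite exchange_big /=; apply: eq_bigr => m _; exact: dot_eQ.
Qed.

Lemma dot_A {N : finType} {R : realFieldType} (P : params N R) j (x : (N + N) + (N * N) -> R) :
  dot (Amat P j) x = Aform P j x.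
Proof.
case: j => [[[n|n]|[n|n]]|[[p|p]|[n|n]]] /=;
  rewrite ?dotN ?dotM ?dotD ?dotB ?dotN ?dot_eD ?dot_eG ?dot_eQ ?dot_Qv //.
Qed.


Set Implicit Arguments. Unset Strict Implicit. Unset Printing Implicit Defensive.

Notation JT N := (((N + N) + (N + N)) + (((N * N) + (N * N)) + (N + N)))%type.
Definition jDlo {N : finType} (n : N) : JT N := inl (inl (inl n)).
Definition jDhi {N : finType} (n : N) : JT N := inl (inl (inr n)).
Definition jGlo {N : finType} (n : N) : JT N := inl (inr (inl n)).
Definition jGhi {N : finType} (n : N) : JT N := inl (inr (inr n)).
Definition jcap {N : finType} (p : N * N) : JT N := inr (inl (inl p)).
Definition jpair {N : finType} (p : N * N) : JT N := inr (inl (inr p)).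
Definition jbp {N : finType} (n : N) : JT N := inr (inr (inl n)).
Definition jbm {N : finType} (n : N) : JT N := inr (inr (inr n)).

Definition Sform {N : finType} {R : realFieldType} (P : params N R) (y : JT N -> R)
   (i : (N + N) + (N * N)) : R :=
  match i with
  | inl (inl n) => - y (jDlo n) + y (jDhi n) + y (jbp n) - y (jbm n)
  | inl (inr n) => - y (jGlo n) + y (jGhi n) - y (jbp n) + y (jbm n)
  | inr p => (nbr P p.2 p.1)%:R * (y (jcap p) + y (jpair p) + y (jpair (p.2, p.1))
                                   - y (jbp p.2) + y (jbm p.2))
  end.

Lemma Qv0 {N : finType} {R : realFieldType} (P : params N R) n z : Qv P n (inl z) = 0.
Proof. by rewrite /Qv big1. Qed.

Lemma QvQ {N : finType} {R : realFieldType} (P : params N R) n p :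
  Qv P n (inr p) = (p.2 == n)%:R * (nbr P n p.1)%:R.
Proof.
  case: p => [m k] /=; rewrite /Qv /eQ /=.
  case: (eqVneq k n) => [->|ne].
    rewrite mul1r big_mkcond (@sum_delta R _ m) /= ?eqxx.
      by case: (nbr P n m).
    move=> x ne; case: ifP => // _.
    by rewrite xpair_eqE eq_sym (negPf ne).
  rewrite big1 ?mul0r // => x _.
  by rewrite xpair_eqE (negPf ne) andbF.
Qed.

Lemma pair_sum {N : finType} {R : realFieldType} (f w : N * N -> R) (p0 : N * N) :
  \sum_i f i * (w i * ((p0 == i)%:R + (p0 == (i.2, i.1))%:R)) =
  f p0 * w p0 + f (p0.2, p0.1) * w (p0.2, p0.1).
Proof.
rewrite (eq_bigr (fun i => f i * w i * (p0 == i)%:R + f i * w i * (p0 == (i.2, i.1))%:R));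
  last by move=> i _; ring.
rewrite big_split /= (@sum_delta R _ p0) ?eqxx ?mulr1; last first.
  by move=> x; rewrite eq_sym => /negPf ->; rewrite mulr0.
congr (_ + _).
rewrite (reindex_inj (h := fun i : N * N => (i.2, i.1))); last by move=> [a b] [c d] /= [-> ->].
rewrite /= (@sum_delta R _ p0) /= -?surjective_pairing ?eqxx ?mulr1 //.
by move=> x; rewrite -surjective_pairing eq_sym => /negPf ->; rewrite mulr0.
Qed.

Ltac z0 := rewrite /= ?mulr0n ?oppr0 ?mulr0 ?mul0r ?addr0 ?add0r ?sub0r ?subr0 ?oppr0 ?mulr0 ?mulr0n.
Ltac z1 := rewrite big1; last by move=> ? _; rewrite ?Qv0; z0.
Ltac dl x0 := rewrite (@sum_delta _ _ x0) ?eqxx;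
  last by move=> ?; rewrite eq_sym => /negPf ->; rewrite ?Qv0; z0.

Lemma stat {N : finType} {R : realFieldType} (P : params N R)
  (hsym : forall n m, nbr P n m = nbr P m n) (y : JT N -> R) i :
  \sum_j y j * Amat P j i = Sform P y i.
Proof.
case: i => [[n0|n0]|p0]; rewrite !big_sumType /=.
- dl n0; dl n0; z1; z1; z1; z1; dl n0; dl n0.
  set a1 := y (jDlo n0); set a2 := y (jDhi n0); set a3 := y (jbp n0); set a4 := y (jbm n0).
  rewrite !Qv0 /=; ring.
- z1; z1; dl n0; dl n0; z1; z1; dl n0; dl n0.
  set a1 := y (jGlo n0); set a2 := y (jGhi n0); set a3 := y (jbp n0); set a4 := y (jbm n0).
  rewrite !Qv0 /=; ring.
- z1; z1; z1; z1; dl p0.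
  rewrite (pair_sum (fun i => y (inr (inl (inr i)))) (fun i => (nbr P i.2 i.1)%:R)).
  rewrite (@sum_delta _ _ p0.2); last first.
    by move=> ?; rewrite QvQ eq_sym => /negPf ->; z0.
  rewrite (@sum_delta _ _ p0.2); last first.
    by move=> ?; rewrite QvQ eq_sym => /negPf ->; z0.
  set a1 := y (jcap p0); set a2 := y (jpair p0); set a3 := y (jpair (p0.2, p0.1)).
  set a4 := y (jbp p0.2); set a5 := y (jbm p0.2).
  rewrite !QvQ eqxx /= -hsym; ring.
Qed.

Set Implicit Arguments. Unset Strict Implicit. Unset Printing Implicit Defensive.

Definition vec {N : finType} {R : realFieldType} (D G : N -> R) (q : N -> N -> R)
  (i : (N + N) + (N * N)) : R :=
  match i with inl (inl n) => D n | inl (inr n) => G n | inr p => q p.1 p.2 end.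

Definition Fobj {N : finType} {R : realFieldType} (P : params N R) (x : (N + N) + (N * N) -> R) : R :=
  SW P (fun n => x (inl (inl n))) (fun n => x (inl (inr n))) (fun m n => x (inr (m, n))).

Definition gvec {N : finType} {R : realFieldType} (P : params N R) (D G : N -> R)
  (i : (N + N) + (N * N)) : R :=
  match i with
  | inl (inl n) => - (2%:R * ua P n * (D n - Dstar P n))
  | inl (inr n) => - (ca P n * G n + cb P n)
  | inr p => - ((nbr P p.2 p.1)%:R * c P p.2 p.1)
  end.

Definition hq {N : finType} {R : realFieldType} (P : params N R) (d : (N + N) + (N * N) -> R) : R :=
  \sum_n (ua P n * d (inl (inl n)) ^+ 2 + ca P n * d (inl (inr n)) ^+ 2 / 2%:R).

Lemma E3 {N : finType} {R : realFieldType} (P : params N R) (d : (N + N) + (N * N) -> R) :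
  \sum_(p : N * N) ((nbr P p.2 p.1)%:R * c P p.2 p.1) * d (inr p) =
  \sum_n \sum_(m | nbr P n m) c P n m * d (inr (m, n)).
Proof.
rewrite (eq_bigr (fun n => \sum_m (if nbr P n m then c P n m * d (inr (m, n)) else 0)));
  last by move=> n _; rewrite big_mkcond.
rewrite exchange_big /= pair_bigA /=; apply: eq_bigr => [[m n]] _ /=.
by case: (nbr P n m); rewrite /= ?mul1r ?mul0r ?mulr0.
Qed.

Lemma sumNl {R : realFieldType} {T : finType} (f g : T -> R) :
  \sum_i (- f i) * g i = - \sum_i f i * g i.
Proof. by rewrite -sumrN; apply: eq_bigr => i _; rewrite mulNr. Qed.

Lemma HF {N : finType} {R : realFieldType} (P : params N R) D G q d t :
  Fobj P (fun i => vec D G q i + t * d i) =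
  Fobj P (vec D G q) + t * dot (gvec P D G) d - t ^+ 2 * hq P d.
Proof.
rewrite /Fobj /dot !big_sumType /= !sumNl E3 /hq /SW.
rewrite !mulr_sumr -!sumrN -!big_split /= mulr_sumr -!big_split /=.
apply: eq_bigr => n _; rewrite /payoff /costCt /utilU /costC /=.
rewrite (eq_bigr (fun m => c P n m * q m n + t * (c P n m * d (inr (m, n)))));
  last by move=> m _; ring.
rewrite big_split /= -mulr_sumr.
set S1 := \sum_(m | nbr P n m) c P n m * q m n.
set S2 := \sum_(m | nbr P n m) c P n m * d (inr (m, n)).
by field.
Qed.

Set Implicit Arguments. Unset Strict Implicit. Unset Printing Implicit Defensive.

Lemma feas_iff {N : finType} {R : realFieldType} (P : params N R) D G q :
  feasible P D G q <-> forall j, Aform P j (vec D G q) <= bv P j.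
Proof.
split.
- move=> Hf [[[n|n]|[n|n]]|[[[m n]|[m n]]|[n|n]]] /=;
    have [/andP[h1 h2] /andP[h3 h4] h5 h6 h7] := Hf n; rewrite ?lerN2 //.
  + have [_ _ h8 _ _] := Hf n; rewrite /=.
    by case E: (nbr P n m); rewrite /= ?mul1r ?mul0r // h8.
  + have [_ _ _ h8 _] := Hf n.
    by case E: (nbr P n m); rewrite /= ?mul1r ?mul0r // h8.
  + move: h7; rewrite /Qnet; lra.
  + move: h7; rewrite /Qnet; lra.
- move=> H n; split.
  + by have := H (jDlo n); have := H (jDhi n); rewrite /= lerN2 => -> ->.
  + by have := H (jGlo n); have := H (jGhi n); rewrite /= lerN2 => -> ->.
  + move=> m nm; have := H (jcap (m, n)); by rewrite /= nm /= !mul1r.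
  + move=> m nm; have := H (jpair (m, n)); by rewrite /= nm /= !mul1r.
  + have := H (jbp n); have := H (jbm n); rewrite /= /Qnet; lra.
Qed.

Unset Implicit Arguments.
Theorem proposition6 (N : finType) (R : realFieldType) (P : params N R) :
  valid_params P ->
  forall (D G : N -> R) (q : N -> N -> R),
    VE P D G q <-> optimal P D G q.
Proof.
move=> [HOr HOs HOroot [HDb HGb Hk Hpos Hc]] D G q.
have hsym : forall n m, nbr P n m = nbr P m n.
  by move=> n m; rewrite /nbr HOs eq_sym.
have Hh : forall d, 0 <= hq P d.
  move=> d; apply: sumr_ge0 => n _; have [_ _ _ hu _] := Hpos n; have [hca _ _ _ _] := Hpos n.
  apply: addr_ge0; first by apply: mulr_ge0; [exact: ltW | exact: sqr_ge0].
  by apply: divr_ge0 => //; apply: mulr_ge0; [exact: ltW | exact: sqr_ge0].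
have key := fun Hxs => @kkt_generic R _ _ (Amat P) (bv P) (vec D G q) (Fobj P) (gvec P D G) (hq P)
   Hxs Hh (HF P D G q).
split.
- move=> [mul [mu [nul [nu [lam [xi [zeta [HK Hz]]]]]]]].
  have Hf : feasible P D G q.
    move=> n; have [_ [h1 h2 h3 h4 h5] _ _] := HK n; split => // m nm.
    move: (h4 m nm); lra.
  have Hxs : forall j, dot (Amat P j) (vec D G q) <= bv P j.
    by move=> j; rewrite dot_A; move: j; apply/feas_iff.
  pose y (j : JT N) : R := match j with
    | inl (inl (inl n)) => mul n
    | inl (inl (inr n)) => mu n
    | inl (inr (inl n)) => nul n
    | inl (inr (inr n)) => nu n
    | inr (inl (inl p)) => if nbr P p.2 p.1 then xi p.2 p.1 else 0
    | inr (inl (inr p)) => if nbr P p.2 p.1 then zeta p.2 p.1 / 2%:R else 0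
    | inr (inr (inl n)) => if 0 <= lam n then lam n else 0
    | inr (inr (inr n)) => if 0 <= lam n then 0 else - lam n
    end.
  have Hy : exists y, (forall j, 0 <= y j /\ y j * (bv P j - dot (Amat P j) (vec D G q)) = 0) /\
             forall i, gvec P D G i = \sum_j y j * Amat P j i.
    exists y; split.
    - case => [[[n|n]|[n|n]]|[[[m n]|[m n]]|[n|n]]]; rewrite dot_A /=;
        have [[s1 s2 s3] [f1 f2 f3 f4 f5] [[c1 c2] [c3 c4] [c5 c6] [c7 c8]] c9] := HK n.
      + by split => //; rewrite -[RHS]c2; ring.
      + by split => //; rewrite -[RHS]c4; ring.
      + by split => //; rewrite -[RHS]c6; ring.
      + by split => //; rewrite -[RHS]c8; ring.
      + case E: (nbr P n m); last by rewrite /= mul0r.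
        have [[x1 x2] _] := c9 m E; split => //; rewrite /= -[RHS]x2; ring.
      + case E: (nbr P n m); last by rewrite /= mul0r.
        have [_ [z1 z2]] := c9 m E; split; first by rewrite divr_ge0.
        rewrite /=; have -> : zeta n m / 2%:R * (0 - 1 * (q m n + q n m)) =
           (zeta n m * (- q m n - q n m)) / 2%:R by ring.
        by rewrite z2 mul0r.
      + move: f5; rewrite /Qnet => f5.
        case: ifP => h; split => //; rewrite ?mul0r //; rewrite f5; ring.
      + move: f5; rewrite /Qnet => f5.
        case: ifP => h; split => //; rewrite ?mul0r //.
          by rewrite oppr_ge0 ltW // ltNge h.
        rewrite f5; ring.
    - move=> i; rewrite stat //; case: i => [[n|n]|[m n]];
        have [[s1 s2 s3] _ _ c9] := HK n; rewrite /y /jDlo /jDhi /jGlo /jGhi /jbp /jbm /jcap /jpair /=.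
      + by case: ifP => _; lra.
      + by case: ifP => _; lra.
      + case E: (nbr P n m); rewrite /= ?mul0r ?oppr0 //.
        rewrite -hsym E Hz ?E //.
        have := s3 m E; rewrite (Hz n m E); case: ifP => _ h; lra.
  have Ho := (key Hxs).2 Hy.
  split => // D' G' q' Hf'.
  apply: (Ho (vec D' G' q')) => j; rewrite dot_A; move: j; exact/feas_iff.
- move=> [Hf Hopt].
  have Hxs : forall j, dot (Amat P j) (vec D G q) <= bv P j.
    by move=> j; rewrite dot_A; move: j; apply/feas_iff.
  have [Hdir _] := key Hxs.
  have [y [Hy Hg]] : exists y : JT N -> R,
      (forall j, 0 <= y j /\ y j * (bv P j - dot (Amat P j) (vec D G q)) = 0) /\
      forall i, gvec P D G i = \sum_j y j * Amat P j i.
    apply: Hdir => x Hx.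
    pose D' := fun n => x (inl (inl n)).
    pose G' := fun n => x (inl (inr n)).
    pose q' := fun m n => x (inr (m, n)).
    have Ex : vec D' G' q' = x.
      by apply: functional_extensionality => -[[n|n]|[m n]].
    have Hf' : feasible P D' G' q'.
      by apply/feas_iff => j; rewrite Ex -dot_A.
    exact: (Hopt _ _ _ Hf').
  have Hs := fun i => etrans (Hg i) (stat hsym y i).
  exists (fun n => y (jDlo n)), (fun n => y (jDhi n)), (fun n => y (jGlo n)), (fun n => y (jGhi n)),
    (fun n => y (jbp n) - y (jbm n)), (fun n m => y (jcap (m, n))),
    (fun n m => y (jpair (m, n)) + y (jpair (n, m))).
  split; last by move=> n m _; rewrite addrC.
  move=> n.
  have [/andP[h1 h2] /andP[h3 h4] h5 h6 h7] := Hf n.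
  split.
  + split.
    * have := Hs (inl (inl n)); rewrite /=; lra.
    * have := Hs (inl (inr n)); rewrite /=; lra.
    * move=> m nm; have := Hs (inr (m, n)); rewrite /= nm /=; lra.
  + split => //; first by rewrite h1 h2.
    * by rewrite h3 h4.
    * move=> m nm; move: (h6 m nm); lra.
  + split.
    * have [y0 yc] := Hy (jDlo n); split => //; rewrite -[RHS]yc dot_A /=; ring.
    * have [y0 yc] := Hy (jDhi n); split => //; rewrite -[RHS]yc dot_A /=; ring.
    * have [y0 yc] := Hy (jGlo n); split => //; rewrite -[RHS]yc dot_A /=; ring.
    * have [y0 yc] := Hy (jGhi n); split => //; rewrite -[RHS]yc dot_A /=; ring.
  + move=> m nm; split.
    * have [y0 yc] := Hy (jcap (m, n)); split => //; rewrite -[RHS]yc dot_A /= nm /=; ring.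
    * have [y0 yc] := Hy (jpair (m, n)); have [y0' yc'] := Hy (jpair (n, m)).
      split; first by rewrite addr_ge0.
      move: yc yc'; rewrite !dot_A /= nm -hsym nm /= => yc yc'.
      have -> : (y (jpair (m, n)) + y (jpair (n, m))) * (- q m n - q n m) =
        y (jpair (m, n)) * (0 - 1 * (q m n + q n m)) + y (jpair (n, m)) * (0 - 1 * (q n m + q m n))
        by ring.
      by rewrite yc yc' addr0.
Qed.
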